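(* For any Boolean function $f:\{0,1\}^n\to\{0,1\}$, $\mathsf{KI}(f)\le\mathrm{depth}(f)$.
   Context: Fix a universal prefix-free Turing machine and let $K(a\mid b)$ denote the prefix-free Kolmogorov complexity of $a$ given $b$. For $f:S\to\{0,1\}$, $S\subseteq\Sigma^n$, $$\mathsf{KI}(f)=\min_{\alpha\in\Sigma^*}\ \max_{x,y:\ f(x)\neq f(y)}\ \min_{i:\ x_i\neq y_i}\big(K(i\mid x,\alpha)+K(i\mid y,\alpha)\big).$$ $\mathrm{depth}(f)$ is the minimum depth of a formula (binary tree with internal nodes labeled $\wedge,\vee$ and leaves labeled by literals $x_i,\neg x_i$) computing $f$. *)

(* Defs.v *)
From mathcomp Require Import all_boot.
From Stdlib Require Import ClassicalEpsilon.

Set Implicit Arguments.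
Unset Strict Implicit.
Unset Printing Implicit Defensive.

(* Minimum of a set of naturals (classical). If P is empty the value is     *)
(* unspecified; all uses below are on nonempty sets (for universal U).      *)
Definition natmin (P : nat -> Prop) : nat :=
  epsilon (inhabits 0%N) (fun m => P m /\ forall k, P k -> (m <= k)%N).

(* Binary strings Sigma* (Sigma = {0,1}) and their bijective coding to nat. *)
Fixpoint nat_of_bits (s : seq bool) : nat :=
  match s with
  | [::] => 0
  | b :: s' => (nat_of_bits s').*2 + (if b then 2 else 1)
  end.

(* Self-delimiting pair coding <s, t> of two strings. *)
Definition pair_bits (s t : seq bool) : seq bool :=
  flatten [seq [:: b; b] | b <- s] ++ [:: false; true] ++ t.

(* Model of computation: Minsky counter machines (Turing complete).         *)
Inductive instr := INC of nat | DECJZ of nat & nat.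
Definition cm := seq instr.
Definition regs := nat -> nat.
Definition upd (r : regs) (k v : nat) : regs := fun j => if j == k then v else r j.

(* One step; a state whose pc is out of range is halted (fixed point). *)
Definition step (P : cm) (s : nat * regs) : nat * regs :=
  let: (pc, r) := s in
  if pc < size P then
    match nth (INC 0) P pc with
    | INC k => (pc.+1, upd r k (r k).+1)
    | DECJZ k j => if r k is v.+1 then (pc.+1, upd r k v) else (j, r)
    end
  else s.

Definition init_regs (a b : nat) : regs :=
  fun j => if j == 0 then a else if j == 1 then b else 0.

Definition cm_computes (P : cm) (a b o : nat) : Prop :=
  exists t, let s := iter t (step P) (0, init_regs a b) in
            (size P <= s.1) /\ s.2 0 = o.

(* Conditional machines: M p c o  means  M(p | c) halts with output o.      *)
Definition machine := seq bool -> seq bool -> seq bool -> Prop.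

Definition computable_machine (M : machine) : Prop :=
  exists P : cm, forall p c o,
    M p c o <-> cm_computes P (nat_of_bits p) (nat_of_bits c) (nat_of_bits o).

Definition prefix_free (M : machine) : Prop :=
  forall c p q o o', M p c o -> M q c o' -> prefix p q -> p = q.

Definition prefix_free_machine (M : machine) : Prop :=
  computable_machine M /\ prefix_free M.

Definition universal_pf (U : machine) : Prop :=
  prefix_free_machine U /\
  forall M, prefix_free_machine M ->
    exists rho : seq bool, forall p c o, M p c o <-> U (rho ++ p) c o.

(* K_U(a | c): prefix-free Kolmogorov complexity of the string a (given as  *)
(* its code nat_of_bits a = i, so that indices i are strings) given c.      *)
Definition Kc (U : machine) (i : nat) (c : seq bool) : nat :=
  natmin (fun k => exists p o, U p c o /\ nat_of_bits o = i /\ size p = k).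

Definition KI (U : machine) (n : nat) (f : n.-tuple bool -> bool) : nat :=
  natmin (fun m => exists alpha : seq bool,
    m = \max_(xy : n.-tuple bool * n.-tuple bool | f xy.1 != f xy.2)
          natmin (fun k => exists i : 'I_n,
             tnth xy.1 i != tnth xy.2 i /\
             k = Kc U i (pair_bits xy.1 alpha) + Kc U i (pair_bits xy.2 alpha))).

Inductive formula (n : nat) :=
| Lit of 'I_n & bool
| FAnd of formula n & formula n
| FOr of formula n & formula n.

Fixpoint feval n (F : formula n) (x : n.-tuple bool) : bool :=
  match F with
  | Lit i b => tnth x i == b
  | FAnd F G => feval F x && feval G x
  | FOr F G => feval F x || feval G x
  end.

Fixpoint fdepth n (F : formula n) : nat :=
  match F with
  | Lit _ _ => 0
  | FAnd F G => (maxn (fdepth F) (fdepth G)).+1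
  | FOr F G => (maxn (fdepth F) (fdepth G)).+1
  end.

Definition depth (n : nat) (f : n.-tuple bool -> bool) : nat :=
  natmin (fun d => exists F : formula n, (forall x, feval F x = f x) /\ fdepth F = d).

(* Main.v *)
Require Import Defs.
From mathcomp Require Import all_boot zify.
From Stdlib Require Import ClassicalEpsilon Classical FunctionalExtensionality.
Set Implicit Arguments. Unset Strict Implicit. Unset Printing Implicit Defensive.

Lemma natmin_spec (P : nat -> Prop) k : P k ->
  P (natmin P) /\ forall j, P j -> natmin P <= j.
Proof.
move=> Pk; rewrite /natmin.
apply: (epsilon_spec (inhabits 0) (fun m => P m /\ forall k, P k -> m <= k)).
have H: forall k j, j <= k -> P j -> exists m, P m /\ forall i, P i -> m <= i.
  elim=> [|k0 IH] j hj Pj.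
    move: hj; rewrite leqn0 => /eqP hj; subst j; exists 0; split => //.
  case: (classic (exists i, i < j /\ P i)) => [[i [hi Pi]]|nex].
    apply: (IH i) => //; rewrite -ltnS; exact: leq_trans hi hj.
  exists j; split => // i Pi; rewrite leqNgt; apply/negP => hij; apply: nex; by exists i.
exact: (H k k (leqnn k) Pk).
Qed.

Lemma natmin_le (P : nat -> Prop) k : P k -> natmin P <= k.
Proof. by move=> Pk; case: (natmin_spec Pk) => _ H; apply: H. Qed.

Lemma natmin_P (P : nat -> Prop) k : P k -> P (natmin P).
Proof. by move=> Pk; case: (natmin_spec Pk). Qed.

Definition popn (n : nat) : bool * nat :=
  if n is 0 then (false, 0) else if odd n then (false, n./2) else (true, n./2 - 1).

Lemma popn_bits b s : popn (nat_of_bits (b :: s)) = (b, nat_of_bits s).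
Proof.
rewrite /=; set m := nat_of_bits s; case: b.
  by rewrite addn2 /= odd_double /= doubleK subn1.
by rewrite addn1 /= odd_double /= uphalf_double.
Qed.

Lemma nat_of_bits0 s : (nat_of_bits s == 0) = (s == [::]).
Proof. case: s => //= b s; rewrite addn_eq0; by case: b; rewrite andbF. Qed.

Lemma half_lt n : 0 < n -> n./2 < n.
Proof. by move=> h; rewrite ltn_half_double -addnn -{1}[n]addn0 ltn_add2l. Qed.

Lemma popn_lt n : 0 < n -> (popn n).2 < n.
Proof.
case: n => // n _; move: (half_lt (ltn0Sn n)) => /= H; case: ifP => _ //=.
apply: leq_ltn_trans (leq_subr 1 _) H.
Qed.

Arguments upd : simpl never.
Definition rf (s : seq nat) : regs := fun j => nth 0 s j.

Lemma upd_rf s k v : upd (rf s) k v = rf (set_nth 0 s k v).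
Proof. apply: functional_extensionality => j; by rewrite /upd /rf nth_set_nth /=. Qed.

Lemma init_rf a b : init_regs a b = rf [:: a; b; 0; 0; 0; 0; 0; 0].
Proof.
apply: functional_extensionality => j; rewrite /init_regs /rf.
case: j => [|[|[|[|[|[|[|[|j]]]]]]]] //=; by case: j.
Qed.

Definition reach (P : cm) s s' := exists t, iter t (step P) s = s'.

Lemma reach_refl P s : reach P s s.
Proof. by exists 0. Qed.

Lemma reach_stepl P s s' : reach P (step P s) s' -> reach P s s'.
Proof. by case=> t H; exists t.+1; rewrite iterSr. Qed.

Lemma reach_trans P s1 s2 s3 : reach P s1 s2 -> reach P s2 s3 -> reach P s1 s3.
Proof. by case=> t1 H1 [t2 H2]; exists (t2 + t1); rewrite iterD H1. Qed.

Definition exec (i : instr) (pc : nat) (r : regs) : nat * regs :=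
  match i with
  | INC k => (pc.+1, upd r k (r k).+1)
  | DECJZ k j => if r k is v.+1 then (pc.+1, upd r k v) else (j, r)
  end.

Definition code_at (P : cm) a (l : seq instr) :=
  take (size l) (drop a P) = l /\ a + size l <= size P.

Lemma step_code P a l pc r : code_at P a l -> a <= pc < a + size l ->
  step P (pc, r) = exec (nth (INC 0) l (pc - a)) pc r.
Proof.
case=> Ht Hs /andP [h1 h2].
have hpc : pc < size P by apply: leq_trans h2 Hs.
have hk : pc - a < size l by rewrite ltn_subLR.
rewrite /step hpc -Ht nth_take // nth_drop subnKC //.
Qed.

Ltac stepc Hc := apply: reach_stepl; rewrite (step_code _ Hc); [|rewrite /=; lia];
  rewrite ?addKn ?subnn /= ?upd_rf /= -?addnS.

Definition pop (R a E F0 F1 : nat) : seq instr :=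
  [:: DECJZ R E; DECJZ R (a + 6); DECJZ R (a + 9); INC R; INC 6; DECJZ 5 a;
      DECJZ 6 F0; INC R; DECJZ 5 (a + 6); DECJZ 6 F1; INC R; DECJZ 5 (a + 9)].

Definition exitp (m E F0 F1 : nat) := if m == 0 then E else if (popn m).1 then F1 else F0.

Lemma pop_mv P a R E F0 F1 s : code_at P a (pop R a E F0 F1) -> R <= 1 -> size s = 8 -> nth 0 s 5 = 0 ->
  forall k X, k \in [:: 6; 9] -> X = (if k == 6 then F0 else F1) -> forall q x,
  reach P (a + k, rf (set_nth 0 (set_nth 0 s 6 q) R x)) (X, rf (set_nth 0 (set_nth 0 s 6 0) R (x + q))).
Proof.
move=> Hc HR; case: s => [|a0 [|a1 [|a2 [|a3 [|a4 [|a5 [|a6 [|a7 [|]]]]]]]]] //= _ -> k X Hk ->.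
case: R Hc HR => [|[|//]] Hc _ /=; move: Hk; rewrite !inE => /orP [] /eqP -> /=;
  (elim=> [|q IH] x; [stepc Hc; rewrite addn0; exact: reach_refl|
   stepc Hc; stepc Hc; stepc Hc; rewrite -[x + q.+1]addSnnS; apply: IH]).
Qed.

Lemma popnSS n : popn n.+3 = ((popn n.+1).1, (popn n.+1).2.+1).
Proof.
rewrite /popn /=; case hn: (odd n) => //=.
case: n hn => [|n] //= hn; by rewrite !subn1.
Qed.

Arguments popn : simpl never.
Lemma exitpSS m E F0 F1 : exitp m.+3 E F0 F1 = exitp m.+1 E F0 F1.
Proof. by rewrite /exitp popnSS. Qed.

Lemma pop_loop P a R E F0 F1 s : code_at P a (pop R a E F0 F1) -> R <= 1 -> size s = 8 -> nth 0 s 5 = 0 ->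
  forall m q, 0 < m ->
  reach P (a, rf (set_nth 0 (set_nth 0 s 6 q) R m))
          (exitp m E F0 F1, rf (set_nth 0 (set_nth 0 s 6 0) R (q + (popn m).2))).
Proof.
move=> Hc HR Hs H5; have Hmv := pop_mv Hc HR Hs H5.
move: Hc HR Hmv; case: s Hs H5 => [|a0 [|a1 [|a2 [|a3 [|a4 [|a5 [|a6 [|a7 [|]]]]]]]]] //= _ -> .
case: R => [|[|//]] Hc _ /= Hmv m;
 (elim: m {-2}m (leqnn m) => [|N IH] m hm q hm0; first by case: m hm hm0);
 rewrite -[a in (a, _)]addn0;
 (case: m hm hm0 => [|[|[|m]]] hm _ //;
  [ stepc Hc; stepc Hc; rewrite addn0; exact: (Hmv 6 F0)
  | stepc Hc; stepc Hc; stepc Hc; rewrite addn0; exact: (Hmv 9 F1)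
  | rewrite exitpSS popnSS /= -[q + _.+1]addSnnS;
    stepc Hc; stepc Hc; stepc Hc; stepc Hc; stepc Hc; stepc Hc;
    exact: (IH m.+1 (ltac:(lia) : m.+1 <= N) q.+1 (ltn0Sn _)) ]).
Qed.

Lemma pop_spec P a R E F0 F1 s : code_at P a (pop R a E F0 F1) -> R <= 1 -> size s = 8 ->
  nth 0 s 5 = 0 -> nth 0 s 6 = 0 -> forall m,
  reach P (a, rf (set_nth 0 s R m)) (exitp m E F0 F1, rf (set_nth 0 s R (popn m).2)).
Proof.
move=> Hc HR Hs H5 H6 [|m].
  apply: reach_stepl; rewrite (step_code _ Hc); last by rewrite /=; lia.
  rewrite subnn /= /rf nth_set_nth /= eqxx; exact: reach_refl.
have := pop_loop Hc HR Hs H5 0 (ltn0Sn m).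
have -> : set_nth 0 s 6 0 = s.
  by case: s Hs H5 H6 => [|a0 [|a1 [|a2 [|a3 [|a4 [|a5 [|a6 [|a7 [|]]]]]]]]] //= _ _ ->.
by [].
Qed.

Definition prog0 : cm :=
 pop 1 0 128 24 12 ++
 pop 1 12 36 36 36 ++
 pop 1 24 37 37 45 ++
 [:: INC 3; INC 3;
     DECJZ 2 42; INC 3; INC 3; DECJZ 5 38;
     DECJZ 3 0; INC 2; DECJZ 5 42;
     DECJZ 2 59; INC 3 ] ++
 pop 1 47 45 45 47 ++
 [:: DECJZ 3 62; INC 2; DECJZ 5 59 ] ++
 pop 1 62 76 76 74 ++
 [:: INC 4; DECJZ 5 62;
     DECJZ 4 82;
     DECJZ 0 79; DECJZ 5 128;
     DECJZ 4 129; INC 0; DECJZ 5 79 ] ++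
 pop 0 82 128 95 94 ++
 [:: INC 7;
     DECJZ 2 110; INC 3; INC 3 ] ++
 pop 1 98 95 95 98 ++
 [:: DECJZ 7 124; INC 3 ] ++
 pop 1 112 124 124 112 ++
 [:: INC 3; DECJZ 3 62; INC 2; DECJZ 5 125;
     DECJZ 5 128 ].

Definition prog := Eval compute in prog0.
Lemma size_prog : size prog = 129. Proof. by []. Qed.

Lemma c0 : code_at prog 0 (pop 1 0 128 24 12). Proof. by split. Qed.
Lemma c12 : code_at prog 12 (pop 1 12 36 36 36). Proof. by split. Qed.
Lemma c24 : code_at prog 24 (pop 1 24 37 37 45). Proof. by split. Qed.
Lemma c47 : code_at prog 47 (pop 1 47 45 45 47). Proof. by split. Qed.
Lemma c62 : code_at prog 62 (pop 1 62 76 76 74). Proof. by split. Qed.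
Lemma c82 : code_at prog 82 (pop 0 82 128 95 94). Proof. by split. Qed.
Lemma c98 : code_at prog 98 (pop 1 98 95 95 98). Proof. by split. Qed.
Lemma c112 : code_at prog 112 (pop 1 112 124 124 112). Proof. by split. Qed.

Lemma step_prog pc r : pc < 129 -> step prog (pc, r) = exec (nth (INC 0) prog pc) pc r.
Proof. by rewrite /step size_prog => ->. Qed.

Ltac stp := apply: reach_stepl; rewrite step_prog //; rewrite [nth _ prog _]/= /= ?upd_rf /=.


Lemma exitp_same m X F1 : (popn m).1 = false -> exitp m X X F1 = X.
Proof. rewrite /exitp => H; rewrite H; by case: (m == 0). Qed.
Lemma exitp_true m E F0 F1 : (popn m).1 = true -> exitp m E F0 F1 = F1.
Proof. rewrite /exitp => H; rewrite H; by case: m H. Qed.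
Lemma exitp_const m X : exitp m X X X = X.
Proof. rewrite /exitp; by case: (m == 0); case: (popn m).1. Qed.
Lemma exitp_false m E F0 F1 : 0 < m -> (popn m).1 = false -> exitp m E F0 F1 = F0.
Proof. rewrite /exitp => h H; rewrite H; by case: m h H. Qed.

Inductive readvR : nat -> nat -> nat -> Prop :=
| rv0 n : (popn n).1 = false -> readvR n 0 (popn n).2
| rvS n v m : (popn n).1 = true -> readvR (popn n).2 v m -> readvR n v.+1 m.

Inductive skR : nat -> nat -> nat -> Prop :=
| sk0 A : skR 0 A A
| skS k A v A1 A2 : readvR A v A1 -> skR k A1 A2 -> skR k.+1 A A2.

Definition cs (J : nat) (b : bool) : nat := (J + J) + (if b then 2 else 1).

Lemma readv_spec n v m : readvR n v m -> forall p J T V B,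
  reach prog (62, rf [:: p; n; J; T; V; 0; 0; B]) (76, rf [:: p; m; J; T; V + v; 0; 0; B]).
Proof.
elim=> {n v m} [n Hn | n v m Hn _ IH] p J T V B.
  have := @pop_spec prog 62 1 76 76 74 [:: p; 0; J; T; V; 0; 0; B] c62 erefl erefl erefl erefl n.
  by rewrite /= exitp_same // addn0.
have := @pop_spec prog 62 1 76 76 74 [:: p; 0; J; T; V; 0; 0; B] c62 erefl erefl erefl erefl n.
rewrite /= exitp_true // => H; apply: reach_trans H _.
stp; stp; rewrite -[V + v.+1]addSnnS; exact: IH.
Qed.

Lemma skipv_spec a X n v m : code_at prog a (pop 1 a X X a) -> readvR n v m -> forall p J T V B,
  reach prog (a, rf [:: p; n; J; T; V; 0; 0; B]) (X, rf [:: p; m; J; T; V; 0; 0; B]).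
Proof.
move=> Hc; elim=> {n v m} [n Hn | n v m Hn _ IH] p J T V B.
  have := @pop_spec prog a 1 X X a [:: p; 0; J; T; V; 0; 0; B] Hc erefl erefl erefl erefl n.
  by rewrite /= exitp_same.
have := @pop_spec prog a 1 X X a [:: p; 0; J; T; V; 0; 0; B] Hc erefl erefl erefl erefl n.
rewrite /= exitp_true // => H; apply: reach_trans H _; exact: IH.
Qed.

Lemma is_spec k A A' : skR k A A' -> forall p T,
  reach prog (45, rf [:: p; A; k; T; 0; 0; 0; 0]) (59, rf [:: p; A'; 0; T + k; 0; 0; 0; 0]).
Proof.
elim=> {k A A'} [A | k A v A1 A2 H1 _ IH] p T.
  stp; rewrite ?addn0 ?add0n; exact: reach_refl.
stp; stp; apply: reach_trans (skipv_spec c47 H1 _ _ _ _ _) _.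
rewrite -[T + k.+1]addSnnS; exact: IH.
Qed.

Lemma mv59 T p A J : reach prog (59, rf [:: p; A; J; T; 0; 0; 0; 0]) (62, rf [:: p; A; J + T; 0; 0; 0; 0; 0]).
Proof.
elim: T J => [|T IH] J; first by stp; rewrite ?addn0 ?add0n; exact: reach_refl.
stp; stp; stp; rewrite -[J + T.+1]addSnnS; exact: IH.
Qed.

Lemma dbl38 J p A T : reach prog (38, rf [:: p; A; J; T; 0; 0; 0; 0]) (42, rf [:: p; A; 0; T + (J + J); 0; 0; 0; 0]).
Proof.
elim: J T => [|J IH] T; first by stp; rewrite ?addn0 ?add0n; exact: reach_refl.
stp; stp; stp; stp; have -> : T + (J.+1 + J.+1) = T.+2 + (J + J) by lia. exact: IH.
Qed.

Lemma mv42 T p A J : reach prog (42, rf [:: p; A; J; T; 0; 0; 0; 0]) (0, rf [:: p; A; J + T; 0; 0; 0; 0; 0]).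
Proof.
elim: T J => [|T IH] J; first by stp; rewrite ?addn0 ?add0n; exact: reach_refl.
stp; stp; stp; rewrite -[J + T.+1]addSnnS; exact: IH.
Qed.

Inductive ph1R : nat -> nat -> option (nat * nat) -> Prop :=
| p1E J : ph1R J 0 None
| p1T J C r : 0 < C -> (popn C).1 = true -> ph1R (cs J true) (popn (popn C).2).2 r -> ph1R J C r
| p1D J C : 0 < C -> (popn C).1 = false -> (popn (popn C).2).1 = true ->
    ph1R J C (Some (J, (popn (popn C).2).2))
| p1F J C r : 0 < C -> (popn C).1 = false -> (popn (popn C).2).1 = false ->
    ph1R (cs J false) (popn (popn C).2).2 r -> ph1R J C r.

Definition divs (s : nat * regs) := exists s', reach prog s (128, rf s') /\ nth 0 s' 5 = 0.

Definition fin1 (s : nat * regs) p (res : option (nat * nat)) :=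
  match res with
  | None => divs s
  | Some (J', A) => reach prog s (45, rf [:: p; A; J'; 0; 0; 0; 0; 0])
  end.

Lemma divs_pre s0 s1 : reach prog s0 s1 -> divs s1 -> divs s0.
Proof. move=> H [s' [H1 H2]]; exists s'; split => //; exact: reach_trans H H1. Qed.

Lemma fin1_pre s0 s1 p res : reach prog s0 s1 -> fin1 s1 p res -> fin1 s0 p res.
Proof. case: res => [[J A]|] /=; [exact: reach_trans | exact: divs_pre]. Qed.

Lemma ph1_spec J C res : ph1R J C res -> forall p, fin1 (0, rf [:: p; C; J; 0; 0; 0; 0; 0]) p res.
Proof.
elim=> {J C res} [J | J C r HC H1 _ IH | J C HC H1 H2 | J C r HC H1 H2 _ IH] p.
- have := @pop_spec prog 0 1 128 24 12 [:: p; 0; J; 0; 0; 0; 0; 0] c0 erefl erefl erefl erefl 0.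
  rewrite /= => H; exists [:: p; 0; J; 0; 0; 0; 0; 0]; split => //.
- apply: fin1_pre (IH p).
  have := @pop_spec prog 0 1 128 24 12 [:: p; 0; J; 0; 0; 0; 0; 0] c0 erefl erefl erefl erefl C.
  rewrite /= exitp_true // => H; apply: reach_trans H _.
  have := @pop_spec prog 12 1 36 36 36 [:: p; 0; J; 0; 0; 0; 0; 0] c12 erefl erefl erefl erefl (popn C).2.
  rewrite /= exitp_const => H; apply: reach_trans H _.
  stp; stp; apply: reach_trans (dbl38 _ _ _ _) _; apply: reach_trans (mv42 _ _ _ _) _.
  rewrite /cs; have -> : 0 + (2 + (J + J)) = J + J + 2 by lia. exact: reach_refl.
- have := @pop_spec prog 0 1 128 24 12 [:: p; 0; J; 0; 0; 0; 0; 0] c0 erefl erefl erefl erefl C.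
  rewrite /= exitp_false // => H; apply: reach_trans H _.
  have := @pop_spec prog 24 1 37 37 45 [:: p; 0; J; 0; 0; 0; 0; 0] c24 erefl erefl erefl erefl (popn C).2.
  by rewrite /= exitp_true.
- apply: fin1_pre (IH p).
  have := @pop_spec prog 0 1 128 24 12 [:: p; 0; J; 0; 0; 0; 0; 0] c0 erefl erefl erefl erefl C.
  rewrite /= exitp_false // => H; apply: reach_trans H _.
  have := @pop_spec prog 24 1 37 37 45 [:: p; 0; J; 0; 0; 0; 0; 0] c24 erefl erefl erefl erefl (popn C).2.
  rewrite /= exitp_same // => H; apply: reach_trans H _.
  stp; apply: reach_trans (dbl38 _ _ _ _) _; apply: reach_trans (mv42 _ _ _ _) _.
  rewrite /cs; have -> : 0 + (1 + (J + J)) = J + J + 1 by lia. exact: reach_refl.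
Qed.

Inductive w2R : seq bool -> nat -> nat -> option nat -> Prop :=
| wLeaf p J A v A1 : readvR A v.+1 A1 -> w2R p J A (if p is [::] then Some v else None)
| wNil J A A1 : readvR A 0 A1 -> w2R [::] J A None
| wCons (b : bool) p J A A1 A2 A3 res : readvR A 0 A1 -> skR J A1 A2 -> skR b A2 A3 ->
    w2R p (cs J b) A3 res -> w2R (b :: p) J A res.

Definition fin2 (s : nat * regs) (res : option nat) :=
  match res with
  | None => divs s
  | Some o => exists s', reach prog s (129, rf (o :: s'))
  end.

Lemma fin2_pre s0 s1 res : reach prog s0 s1 -> fin2 s1 res -> fin2 s0 res.
Proof.
case: res => [o|] /= H; last exact: divs_pre.
by case=> s' H1; exists s'; exact: reach_trans H H1.
Qed.

Lemma skR0 A A' : skR 0 A A' -> A' = A.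
Proof. by move=> H; inversion H. Qed.

Lemma skR1 A A' : skR 1 A A' -> exists v, readvR A v A'.
Proof.
move=> H; inversion H as [|k A0 v A1 A2 Hr Hs]; subst.
move: (skR0 Hs) => ->. by exists v.
Qed.

Lemma sk95 k A A' : skR k A A' -> forall P T B,
  reach prog (95, rf [:: P; A; k; T; 0; 0; 0; B]) (110, rf [:: P; A'; 0; T + (k + k); 0; 0; 0; B]).
Proof.
elim=> {k A A'} [A | k A v A1 A2 H1 _ IH] P T B.
  stp; rewrite ?addn0 ?add0n; exact: reach_refl.
stp; stp; stp; apply: reach_trans (skipv_spec c98 H1 _ _ _ _ _) _.
have -> : T + (k.+1 + k.+1) = T.+2 + (k + k) by lia. exact: IH.
Qed.

Lemma mvout V x A J T B : reach prog (79, rf [:: x; A; J; T; V; 0; 0; B]) (129, rf [:: x + V; A; J; T; 0; 0; 0; B]).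
Proof.
elim: V x => [|V IH] x; first by stp; rewrite ?addn0 ?add0n; exact: reach_refl.
stp; stp; stp; rewrite -[x + V.+1]addSnnS; exact: IH.
Qed.

Lemma mv125 T P A J : reach prog (125, rf [:: P; A; J; T; 0; 0; 0; 0]) (62, rf [:: P; A; J + T; 0; 0; 0; 0; 0]).
Proof.
elim: T J => [|T IH] J; first by stp; rewrite ?addn0 ?add0n; exact: reach_refl.
stp; stp; stp; rewrite -[J + T.+1]addSnnS; exact: IH.
Qed.

Lemma nat_bits_pos b s : exists k, nat_of_bits (b :: s) = k.+1.
Proof. by case: b => /=; [exists (nat_of_bits s).*2.+1; rewrite addn2 | exists (nat_of_bits s).*2; rewrite addn1]. Qed.

Lemma exitp_bits b s E F0 F1 : exitp (nat_of_bits (b :: s)) E F0 F1 = if b then F1 else F0.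
Proof. by rewrite /exitp popn_bits nat_of_bits0. Qed.

Lemma w2_spec p J A res : w2R p J A res -> fin2 (62, rf [:: nat_of_bits p; A; J; 0; 0; 0; 0; 0]) res.
Proof.
elim=> {p J A res} [p J A v A1 H1 | J A A1 H1 | b p J A A1 A2 A3 res H1 H2 H3 _ IH].
- apply: fin2_pre (readv_spec H1 _ _ _ _ _) _; rewrite add0n.
  case: p => [|b p] /=.
    exists [:: A1; J; 0; 0; 0; 0; 0].
    stp; stp; have := mvout v 0 A1 J 0 0; by rewrite add0n.
  have [k hk] := nat_bits_pos b p; rewrite /= in hk; rewrite hk.
  exists [:: k; A1; J; 0; v; 0; 0; 0]; split => //.
  stp; stp; stp; exact: reach_refl.
- apply: fin2_pre (readv_spec H1 _ _ _ _ _) _; rewrite add0n.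
  rewrite /=; exists [:: 0; A1; J; 0; 0; 0; 0; 0]; split => //.
  stp; exact: (@pop_spec prog 82 0 128 95 94 [:: 0; A1; J; 0; 0; 0; 0; 0] c82 erefl erefl erefl erefl 0).
- apply: fin2_pre (readv_spec H1 _ _ _ _ _) _; rewrite add0n.
  apply: fin2_pre _ IH.
  stp; have H := @pop_spec prog 82 0 128 95 94 [:: 0; A1; J; 0; 0; 0; 0; 0] c82 erefl erefl erefl erefl (nat_of_bits (b :: p)).
  rewrite exitp_bits popn_bits /= in H; apply: reach_trans H _.
  case: b H3 => H3.
  + stp; apply: reach_trans (sk95 H2 _ _ _) _.
    case: (skR1 H3) => v Hv.
    stp; stp; apply: reach_trans (skipv_spec c112 Hv _ _ _ _ _) _.
    stp; apply: reach_trans (mv125 _ _ _ _) _.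
    rewrite /cs; have -> : 0 + (0 + (J + J)).+2 = J + J + 2 by lia. exact: reach_refl.
  + rewrite (skR0 H3).
    apply: reach_trans (sk95 H2 _ _ _) _.
    stp; stp; apply: reach_trans (mv125 _ _ _ _) _.
    rewrite /cs; have -> : 0 + (0 + (J + J)).+1 = J + J + 1 by lia. exact: reach_refl.
Qed.

Definition specR p C res :=
  (ph1R 0 C None /\ res = None) \/
  (exists J A A', ph1R 0 C (Some (J, A)) /\ skR J A A' /\ w2R p J A' res).

Lemma spec_machine p C res : specR p C res -> fin2 (0, init_regs (nat_of_bits p) C) res.
Proof.
rewrite init_rf; case=> [[H ->]|[J [A [A' [H1 [H2 H3]]]]]].
  exact: (ph1_spec H (nat_of_bits p)).
apply: fin2_pre (w2_spec H3).
apply: reach_trans (ph1_spec H1 (nat_of_bits p)) _.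
apply: reach_trans (is_spec H2 _ _) _.
apply: reach_trans (mv59 _ _ _ _) _; rewrite !add0n; exact: reach_refl.
Qed.

Lemma popn_le n : (popn n).2 <= n.
Proof. case: n => [|n] //; exact: ltnW (popn_lt (ltn0Sn n)). Qed.

Lemma popn0_false n : (popn n).1 = true -> 0 < n.
Proof. by case: n. Qed.

Lemma readv_total n : exists v m, readvR n v m.
Proof.
elim: n {-2}n (leqnn n) => [|N IH] n hn.
  move: hn; rewrite leqn0 => /eqP ->; exists 0, 0; exact: (rv0 (n:=0) erefl).
case h: (popn n).1; last by exists 0, (popn n).2; exact: rv0.
have hlt := popn_lt (popn0_false h).
case: (IH (popn n).2 (ltac:(lia))) => v [m Hm]; exists v.+1, m; exact: rvS.
Qed.

Lemma skR_total k A : exists A', skR k A A'.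
Proof.
elim: k A => [|k IH] A; first by exists A; exact: sk0.
case: (readv_total A) => v [A1 H1]; case: (IH A1) => A2 H2; exists A2; exact: skS H1 H2.
Qed.

Lemma ph1_total C J : exists res, ph1R J C res.
Proof.
elim: C {-2}C (leqnn C) J => [|N IH] C hC J.
  move: hC; rewrite leqn0 => /eqP ->; exists None; exact: p1E.
case: C hC => [|C] hC; first by exists None; exact: p1E.
have hlt : (popn (popn C.+1).2).2 <= N.
  have := popn_lt (ltn0Sn C); have := popn_le (popn C.+1).2; lia.
case h1: (popn C.+1).1.
  case: (IH _ hlt (cs J true)) => r Hr; exists r; exact: p1T.
case h2: (popn (popn C.+1).2).1.
  by eexists; exact: p1D.
case: (IH _ hlt (cs J false)) => r Hr; exists r; exact: p1F.
Qed.

Lemma w2_total p J A : exists res, w2R p J A res.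
Proof.
elim: p J A => [|b p IH] J A; case: (readv_total A) => [[|v] [A1 H1]].
- by eexists; exact: wNil H1.
- by eexists; exact: wLeaf H1.
- case: (skR_total J A1) => A2 H2; case: (skR_total b A2) => A3 H3.
  case: (IH (cs J b) A3) => r Hr; exists r; exact: wCons H1 H2 H3 Hr.
- by eexists; exact: wLeaf H1.
Qed.

Lemma spec_total p C : exists res, specR p C res.
Proof.
case: (ph1_total C 0) => [[[J A]|] H].
  case: (skR_total J A) => A' H2; case: (w2_total p J A') => r Hr.
  exists r; right; by exists J, A, A'.
exists None; by left.
Qed.

Lemma readv_det n v m : readvR n v m -> forall v' m', readvR n v' m' -> v = v' /\ m = m'.
Proof.
elim=> {n v m} [n Hn | n v m Hn _ IH] v' m' H; inversion H; subst => //.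
- by rewrite Hn in H0.
- by rewrite Hn in H0.
- by case: (IH _ _ H1) => -> ->.
Qed.

Lemma skR_det k A A1 : skR k A A1 -> forall A2, skR k A A2 -> A1 = A2.
Proof.
elim=> {k A A1} [A | k A v A1 A2 H1 _ IH] A' H; inversion H; subst => //.
case: (readv_det H1 H2) => _ h; subst; exact: IH.
Qed.

Lemma ph1_det J C r : ph1R J C r -> forall r', ph1R J C r' -> r = r'.
Proof.
elim=> {J C r} [J | J C r HC H1 _ IH | J C HC H1 H2 | J C r HC H1 H2 _ IH] r' H;
  inversion H; subst => //; try congruence; try by apply: IH.
Qed.

Lemma iter_halted t s : size prog <= s.1 -> iter t (step prog) s = s.
Proof.
case: s => pc r /= h; elim: t => //= t ->; by rewrite /step ltnNge h.
Qed.

Lemma iter_div t s : nth 0 s 5 = 0 -> iter t (step prog) (128, rf s) = (128, rf s).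
Proof.
move=> h; elim: t => //= t ->; by rewrite step_prog // [nth _ prog _]/= /exec {1}/rf h.
Qed.

Lemma divs_nohalt a b o : divs (0, init_regs a b) -> ~ cm_computes prog a b o.
Proof.
case=> s' [[tD HD] H5] [t [Ht _]].
have E1 : iter (t + tD) (step prog) (0, init_regs a b) = (128, rf s') by rewrite iterD HD iter_div.
have E2 : iter (tD + t) (step prog) (0, init_regs a b) = iter t (step prog) (0, init_regs a b).
  by rewrite iterD iter_halted.
move: Ht; rewrite -E2 addnC E1 size_prog.
by [].
Qed.

Lemma halt_unique a b o o' s : reach prog (0, init_regs a b) (129, rf (o' :: s)) ->
  cm_computes prog a b o -> o = o'.
Proof.
case=> tH HH [t [Ht Ho]].
have E1 : iter (t + tH) (step prog) (0, init_regs a b) = (129, rf (o' :: s)).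
  by rewrite iterD HH iter_halted // size_prog.
have E2 : iter (tH + t) (step prog) (0, init_regs a b) = iter t (step prog) (0, init_regs a b).
  by rewrite iterD iter_halted.
by move: Ho; rewrite -E2 addnC E1.
Qed.

Lemma machine_char p C o : cm_computes prog (nat_of_bits p) C o <-> specR p C (Some o).
Proof.
split.
  move=> H; case: (spec_total p C) => [[o'|] Hs]; have := spec_machine Hs => /=.
    by case=> s Hr; rewrite (halt_unique Hr H).
  by move=> Hd; case: (divs_nohalt Hd H).
move=> Hs; case: (spec_machine Hs) => s [t Ht]; exists t; rewrite Ht size_prog //.
Qed.

Lemma w2_inv_nil J A o : w2R [::] J A (Some o) -> exists A1, readvR A o.+1 A1.
Proof. move=> H; inversion H; subst; eexists; eassumption. Qed.

Lemma w2_inv_cons b p J A o : w2R (b :: p) J A (Some o) ->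
  exists A1 A2 A3, [/\ readvR A 0 A1, skR J A1 A2, skR b A2 A3 & w2R p (cs J b) A3 (Some o)].
Proof. move=> H; inversion H; subst; do 3 eexists; split; eassumption. Qed.

Lemma w2_leaf_cons b p J A o v A1 : w2R (b :: p) J A (Some o) -> readvR A v.+1 A1 -> False.
Proof.
case/w2_inv_cons => [B1 [B2 [B3 [H1 _ _ _]]]] H2.
by case: (readv_det H1 H2).
Qed.

Lemma w2_prefix p : forall q J A o o', w2R p J A (Some o) -> w2R q J A (Some o') ->
  prefix p q -> p = q.
Proof.
elim: p => [|b p IH] q J A o o' Hp Hq.
  case: q Hq => [|c q] Hq _ //.
  case: (w2_inv_nil Hp) => A1 HA; case: (w2_leaf_cons Hq HA).
case: q Hq => [|c q] Hq //= /andP [/eqP hbc Hpre]; subst c.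
case/w2_inv_cons: Hp => [A1 [A2 [A3 [H1 H2 H3 H4]]]].
case/w2_inv_cons: Hq => [B1 [B2 [B3 [G1 G2 G3 G4]]]].
case: (readv_det H1 G1) => _ ?; subst.
have ? := skR_det H2 G2; subst.
have ? := skR_det H3 G3; subst.
by rewrite (IH _ _ _ _ _ H4 G4 Hpre).
Qed.

Definition Mach : machine :=
  fun p c o => cm_computes prog (nat_of_bits p) (nat_of_bits c) (nat_of_bits o).

Lemma Mach_pf : prefix_free_machine Mach.
Proof.
split; first by exists prog.
move=> c p q o o' /machine_char Hp /machine_char Hq Hpre.
case: Hp => [[_ //]|[J [A [A' [H1 [H2 H3]]]]]].
case: Hq => [[_ //]|[J' [B [B' [G1 [G2 G3]]]]]].
have := ph1_det H1 G1 => [[? ?]]; subst.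
have ? := skR_det H2 G2; subst.
exact: w2_prefix H3 G3 Hpre.
Qed.

Fixpoint bof (f n : nat) : seq bool :=
  if f is f'.+1 then (if n is 0 then [::] else (popn n).1 :: bof f' (popn n).2) else [::].
Definition bits_of n := bof n n.

Lemma popn_rec n : 0 < n -> nat_of_bits ((popn n).1 :: bits_of 0) = n - 0 -> True.
Proof. by []. Qed.

Lemma popn_recon n : 0 < n -> ((popn n).2).*2 + (if (popn n).1 then 2 else 1) = n.
Proof.
case: n => // n _; have := odd_double_half n.+1; rewrite /popn.
case: (odd n.+1) => /= h.
  by rewrite addnC.
move: h; case: (uphalf n) => [|k] /=; first by rewrite add0n.
by rewrite add0n subn1 /= doubleS addn2.
Qed.

Lemma nat_bof f n : n <= f -> nat_of_bits (bof f n) = n.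
Proof.
elim: f n => [|f IH] n hn; first by move: hn; rewrite leqn0 => /eqP ->.
case: n hn => [|n] hn //=.
have hlt := popn_lt (ltn0Sn n).
rewrite IH; last by lia.
exact: popn_recon.
Qed.

Lemma nat_bits_of n : nat_of_bits (bits_of n) = n.
Proof. exact: nat_bof. Qed.

Lemma size_le_nat s : size s <= nat_of_bits s.
Proof. elim: s => //= b s IH; rewrite -addnn; case: b; lia. Qed.

Lemma bof_nat f s : nat_of_bits s <= f -> bof f (nat_of_bits s) = s.
Proof.
elim: s f => [|b s IH] [|f] //.
  by move=> H; have [k hk] := nat_bits_pos b s; rewrite hk in H.
move=> hf; have [k hk] := nat_bits_pos b s.
have E : bof f.+1 (nat_of_bits (b :: s)) =
  (popn (nat_of_bits (b::s))).1 :: bof f (popn (nat_of_bits (b::s))).2 by rewrite hk.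
rewrite E popn_bits /= IH //; clear E hk.
move: hf; rewrite /= -addnn; case: b; lia.
Qed.

Lemma bits_of_nat s : bits_of (nat_of_bits s) = s.
Proof. exact: bof_nat. Qed.

Definition code (l : seq bool) := nat_of_bits (rev l).

Lemma code_rcons l b : code (rcons l b) = cs (code l) b.
Proof. by rewrite /code rev_rcons /= /cs addnn. Qed.

Lemma code_lt l : code l < 2 ^ (size l).+1.
Proof.
suff : (code l).+2 <= 2 ^ (size l).+1 by lia.
rewrite /code -size_rev; elim: (rev l) => //= b s IH.
rewrite expnS -addnn; case: b; lia.
Qed.

Lemma rev_bits_code l : rev (bits_of (code l)) = l.
Proof. by rewrite /code bits_of_nat revK. Qed.

Definition stm alpha z := flatten [seq [:: b; b] | b <- z] ++ [:: false; true] ++ alpha.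

Lemma ph1_pair z alpha J :
  ph1R J (nat_of_bits (flatten [seq [:: b; b] | b <- z] ++ [:: false; true] ++ alpha))
       (Some (foldl cs J z, nat_of_bits alpha)).
Proof.
have Ec : forall b z, stm alpha (b :: z) = b :: b :: stm alpha z by [].
have En : stm alpha [::] = false :: true :: alpha by [].
rewrite -/(stm alpha z).
elim: z J => [|b z IH] J.
  rewrite En; have := @p1D J (nat_of_bits [:: false, true & alpha]).
  rewrite !popn_bits; apply => //; by rewrite /= addn1.
rewrite Ec; have [k hk] := nat_bits_pos b (b :: stm alpha z).
have hp : 0 < nat_of_bits [:: b, b & stm alpha z] by rewrite hk.
case: b hk hp => hk hp.
  apply: p1T => //; first by rewrite popn_bits.
  rewrite !popn_bits /=; exact: IH.
apply: p1F => //; rewrite ?popn_bits //.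
Qed.

Lemma foldl_code l : foldl cs 0 l = code l.
Proof.
elim/last_ind: l => // l b IH; by rewrite foldl_rcons IH code_rcons.
Qed.

Fixpoint wst n (F : formula n) (z : n.-tuple bool) (pos : bool) (s : seq bool) : nat :=
  match F with
  | Lit i _ => if s is [::] then (nat_of_ord i).+1 else 0
  | FAnd G H => if pos then (if s is b :: s' then wst (if b then H else G) z pos s' else 0)
                else wst (if ~~ feval G z then G else H) z pos s
  | FOr G H => if pos then wst (if feval G z then G else H) z pos s
               else (if s is b :: s' then wst (if b then H else G) z pos s' else 0)
  end.

Lemma wst_leaf_nil n (G : formula n) z pos b s : 0 < wst G z pos [::] -> wst G z pos (b :: s) = 0.
Proof.
case: pos; elim: G => [i c|G IHG H IHH|G IHG H IHH] //=;
  by case: ifP => _ ?; [apply: IHG | apply: IHH].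
Qed.

Lemma wst_step n (G : formula n) z pos b : wst G z pos [::] = 0 ->
  exists G', fdepth G' < fdepth G /\ forall s, wst G z pos (b :: s) = wst G' z pos s.
Proof.
case: pos; elim: G => [i c|G IHG H IHH|G IHG H IHH] //=.
- by move=> _; exists (if b then H else G); split => //; clear IHG IHH; case: b => /=; lia.
- case: ifP => _ h; [case: (IHG h) | case: (IHH h)] => G' [h1 h2]; exists G'; split => //; lia.
- case: ifP => _ h; [case: (IHG h) | case: (IHH h)] => G' [h1 h2]; exists G'; split => //; lia.
- by move=> _; exists (if b then H else G); split => //; clear IHG IHH; case: b => /=; lia.
Qed.

Lemma wst_size n (G : formula n) z pos p : 0 < wst G z pos p -> size p <= fdepth G.
Proof.
case: pos; elim: G p => [i c|G IHG H IHH|G IHG H IHH] p /=; try by case: p.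
- case: p => // b p; case: b => /= h; [have := IHH _ h | have := IHG _ h]; lia.
- case: ifP => _ h; [have := IHG _ h | have := IHH _ h]; lia.
- case: ifP => _ h; [have := IHG _ h | have := IHH _ h]; lia.
- case: p => // b p; case: b => /= h; [have := IHH _ h | have := IHG _ h]; lia.
Qed.

Lemma joint n (G : formula n) x y : feval G x -> ~~ feval G y ->
  exists (i : 'I_n) px py, [/\ tnth x i != tnth y i, wst G x true px = i.+1,
     wst G y false py = i.+1 & size px + size py <= fdepth G].
Proof.
elim: G => [i c|G IHG H IHH|G IHG H IHH] /=.
- move=> /eqP hx hy; exists i, [::], [::]; split => //; by rewrite hx eq_sym.
- move=> /andP [hG hH] hy.
  case hGy: (feval G y) => /=.
    have hHy : ~~ feval H y by move: hy; rewrite hGy.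
    case: (IHH hH hHy) => i [px [py [h1 h2 h3 h4]]].
    exists i, (true :: px), py; split => //=; lia.
  case: (IHG hG (negbT hGy)) => i [px [py [h1 h2 h3 h4]]].
  exists i, (false :: px), py; split => //=; lia.
- move=> hx; rewrite negb_or => /andP [hGy hHy].
  case hGx: (feval G x) => /=.
    case: (IHG hGx hGy) => i [px [py [h1 h2 h3 h4]]].
    exists i, px, (false :: py); split => //=; lia.
  have hHx : feval H x by move: hx; rewrite hGx.
  case: (IHH hHx hHy) => i [px [py [h1 h2 h3 h4]]].
  exists i, px, (true :: py); split => //=; lia.
Qed.

Definition tv n (F : formula n) (l : seq bool) : nat :=
  if n <= size l then
    let z := insubd (nseq_tuple n false) (take n l) in wst F z (feval F z) (drop n l)
  else 0.
Definition val n (F : formula n) j := tv F (rev (bits_of j)).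
Definition unary v := nseq v true ++ [:: false].
Definition tl n (F : formula n) B j := nat_of_bits (flatten [seq unary (val F k) | k <- iota j (B - j)]).
Definition alphaF n (F : formula n) B := flatten [seq unary (val F k) | k <- iota 0 B].

Lemma readv_unary v rest : readvR (nat_of_bits (nseq v true ++ false :: rest)) v (nat_of_bits rest).
Proof.
elim: v => [|v IH] /=.
  have := @rv0 (nat_of_bits (false :: rest)); rewrite popn_bits; exact.
have := @rvS (nat_of_bits (true :: nseq v true ++ false :: rest)); rewrite popn_bits; apply => //.
Qed.

Lemma tl_read n (F : formula n) B j : j < B -> readvR (tl F B j) (val F j) (tl F B j.+1).
Proof.
move=> hj; rewrite /tl -(subnSK hj) /= /unary -catA /=; exact: readv_unary.
Qed.

Lemma tl_skip n (F : formula n) B k : forall j, j + k <= B -> skR k (tl F B j) (tl F B (j + k)).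
Proof.
elim: k => [|k IH] j hjk; first by rewrite addn0; exact: sk0.
apply: skS (tl_read F (_ : j < B)) _; first by lia.
rewrite -addSnnS; apply: IH; lia.
Qed.

Lemma tl0 n (F : formula n) B : tl F B 0 = nat_of_bits (alphaF F B).
Proof. by rewrite /tl subn0. Qed.

Lemma val_code n (F : formula n) (z : n.-tuple bool) s0 :
  val F (code (z ++ s0)) = wst F z (feval F z) s0.
Proof.
rewrite /val rev_bits_code /tv size_cat size_tuple leq_addr /=.
by rewrite take_size_cat ?size_tuple // drop_size_cat ?size_tuple // valKd.
Qed.

Lemma walk n (F : formula n) (z : n.-tuple bool) B i : B = 2 ^ (n + fdepth F).+1 ->
  forall p s0 G, (forall s, wst F z (feval F z) (s0 ++ s) = wst G z (feval F z) s) ->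
  size s0 + fdepth G <= fdepth F -> wst G z (feval F z) p = i.+1 ->
  w2R p (code (z ++ s0)) (tl F B (code (z ++ s0))) (Some i).
Proof.
move=> hB; set pos := feval F z.
have Hlt : forall s0, size s0 <= fdepth F -> code (z ++ s0) < B.
  move=> s0 h; apply: leq_trans (code_lt _) _; rewrite hB leq_pexp2l // size_cat size_tuple; lia.
elim=> [|b p IH] s0 G HG Hs Hp.
  have hJ := Hlt s0 (ltac:(lia)).
  have R := tl_read F hJ; have := HG [::]; rewrite cats0 => e.
  rewrite val_code -/pos e Hp in R.
  exact: (wLeaf [::] _ R).
have hv : wst G z pos [::] = 0.
  case h: (wst G z pos [::]) => [//|k]; rewrite (@wst_leaf_nil _ G z pos b p) in Hp => //; by rewrite h.
case: (wst_step b hv) => G' [hd HG'].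
have hJ := Hlt s0 (ltac:(lia)).
set J := code (z ++ s0) in hJ *.
have hJ' : code (z ++ s0 ++ [:: b]) = cs J b by rewrite catA cats1 code_rcons.
have hJ'B := Hlt (s0 ++ [:: b]) (ltac:(rewrite size_cat /=; lia)).
rewrite hJ' /cs in hJ'B.
have R := tl_read F hJ; have := HG [::]; rewrite cats0 => e.
rewrite val_code -/pos e hv in R.
have S1 : skR J (tl F B J.+1) (tl F B (J.+1 + J)) by apply: tl_skip; case: b {HG' IH Hp hJ'} hJ'B; lia.
have S2 : skR b (tl F B (J.+1 + J)) (tl F B (J.+1 + J + b)) by apply: tl_skip; case: b {HG' IH Hp hJ' S1} hJ'B; lia.
apply: (wCons R S1 S2).
have -> : J.+1 + J + b = cs J b by rewrite /cs; clear -J; case: b; lia.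
rewrite -hJ'; apply: IH.
- by move=> s; rewrite -catA HG /= HG'.
- rewrite size_cat /=; lia.
- by rewrite -HG'.
Qed.

Fixpoint andl n (l : seq (formula n)) (d : formula n) :=
  if l is G :: l' then FAnd G (andl l' d) else d.
Fixpoint orl n (l : seq (formula n)) (d : formula n) :=
  if l is G :: l' then FOr G (orl l' d) else d.

Lemma feval_andl n (l : seq (formula n)) d y : feval (andl l d) y = all (fun G => feval G y) l && feval d y.
Proof. by elim: l => //= G l ->; rewrite andbA. Qed.
Lemma feval_orl n (l : seq (formula n)) d y : feval (orl l d) y = has (fun G => feval G y) l || feval d y.
Proof. by elim: l => //= G l ->; rewrite orbA. Qed.

Definition minterm n (x : n.+1.-tuple bool) : formula n.+1 :=
  andl [seq Lit i (tnth x i) | i <- enum 'I_n.+1] (Lit ord0 (tnth x ord0)).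

Lemma feval_minterm n (x y : n.+1.-tuple bool) : feval (minterm x) y = (y == x).
Proof.
rewrite /minterm feval_andl /= all_map.
apply/idP/eqP => [/andP [/allP H _]|->].
  apply: eq_from_tnth => i; apply/eqP; exact: (H i (mem_enum _ i)).
by rewrite eqxx andbT; apply/allP => i _ /=.
Qed.

Definition dnf n (f : n.+1.-tuple bool -> bool) : formula n.+1 :=
  orl [seq minterm x | x <- enum [pred x | f x]] (FAnd (Lit ord0 true) (Lit ord0 false)).

Lemma feval_dnf n (f : n.+1.-tuple bool -> bool) y : feval (dnf f) y = f y.
Proof.
rewrite /dnf feval_orl /= has_map.
rewrite [X in _ || X](_ : _ = false); last by case: (tnth y _).
rewrite orbF; apply/hasP/idP => [[x]|fy].
  by rewrite mem_enum /= => fx /=; rewrite feval_minterm => /eqP ->.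
by exists y; rewrite ?mem_enum //= feval_minterm.
Qed.

Lemma depth_spec n (f : n.+1.-tuple bool -> bool) :
  exists F : formula n.+1, (forall x, feval F x = f x) /\ fdepth F = depth f.
Proof.
rewrite /depth.
apply: (@natmin_P (fun d => exists F : formula n.+1, (forall x, feval F x = f x) /\ fdepth F = d)
  (fdepth (dnf f))).
exists (dnf f); split => //; exact: feval_dnf.
Qed.

Lemma Kc_bound (U : machine) rho (HU : forall p c o, Mach p c o <-> U (rho ++ p) c o)
  i c p : specR p (nat_of_bits c) (Some i) -> Kc U i c <= size rho + size p.
Proof.
move=> Hs; rewrite /Kc; apply: natmin_le; exists (rho ++ p), (bits_of i).
split; last by rewrite nat_bits_of size_cat.
apply/HU; rewrite /Mach machine_char nat_bits_of //.
Qed.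

Lemma spec_pair n (F : formula n) (z : n.-tuple bool) p i :
  wst F z (feval F z) p = i.+1 ->
  specR p (nat_of_bits (pair_bits z (alphaF F (2 ^ (n + fdepth F).+1)))) (Some i).
Proof.
move=> Hp; set B := 2 ^ (n + fdepth F).+1.
right; exists (code z), (nat_of_bits (alphaF F B)), (tl F B (code z)); split; [|split].
- rewrite -foldl_code; exact: ph1_pair.
- rewrite -tl0; have := @tl_skip _ F B (code z) 0; rewrite add0n; apply.
  apply: ltnW; apply: leq_trans (code_lt _) _; rewrite leq_pexp2l // size_tuple; lia.
- have := @walk n F z B i erefl p [::] F (fun s => erefl) (leqnn _) Hp.
  by rewrite cats0.
Qed.

Theorem mainTheorem5 (U : machine) (hU : universal_pf U) :
  exists c : nat, forall (n : nat) (f : n.-tuple bool -> bool),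
    KI U f <= depth f + c.
Proof.
case: hU => _ /(_ Mach Mach_pf) [rho Hrho].
exists (size rho + size rho) => n f.
case: n f => [|n] f.
  rewrite /KI; apply: (@leq_trans 0) => //; apply: natmin_le.
  exists [::]; apply/esym/eqP; rewrite -leqn0; apply/bigmax_leqP => xy.
  by rewrite (tuple0 xy.1) (tuple0 xy.2) eqxx.
case: (depth_spec f) => F [HF <-].
set B := 2 ^ (n.+1 + fdepth F).+1.
rewrite /KI; apply: leq_trans; first apply: natmin_le.
  exists (alphaF F B); reflexivity.
apply/bigmax_leqP => xy hxy.
case hx: (f xy.1).
- have hy : f xy.2 = false by move: hxy; rewrite hx; case: (f xy.2).
  have [i [px [py [h1 h2 h3 h4]]]] := @joint _ F xy.1 xy.2 (ltac:(by rewrite HF)) (ltac:(by rewrite HF hy)).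
  apply: (@leq_trans (Kc U i (pair_bits xy.1 (alphaF F B)) + Kc U i (pair_bits xy.2 (alphaF F B)))).
    by apply: natmin_le; exists i.
  have K1 := Kc_bound Hrho (@spec_pair _ F xy.1 px i (ltac:(by rewrite HF hx))).
  have K2 := Kc_bound Hrho (@spec_pair _ F xy.2 py i (ltac:(by rewrite HF hy))).
  rewrite -/B in K1 K2; apply: leq_trans (leq_add K1 K2) _; lia.
- have hy : f xy.2 = true by move: hxy; rewrite hx; case: (f xy.2).
  have [i [px [py [h1 h2 h3 h4]]]] := @joint _ F xy.2 xy.1 (ltac:(by rewrite HF)) (ltac:(by rewrite HF hx)).
  apply: (@leq_trans (Kc U i (pair_bits xy.1 (alphaF F B)) + Kc U i (pair_bits xy.2 (alphaF F B)))).
    by apply: natmin_le; exists i; rewrite eq_sym.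
  have K1 := Kc_bound Hrho (@spec_pair _ F xy.2 px i (ltac:(by rewrite HF hy))).
  have K2 := Kc_bound Hrho (@spec_pair _ F xy.1 py i (ltac:(by rewrite HF hx))).
  rewrite -/B in K1 K2; apply: leq_trans (leq_add K2 K1) _; lia.
Qed.
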